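(* Let $\pi\in S_n$ be a 321-avoiding permutation which is not the identity, and let $i_1<i_2<\dots<i_r$ be its excedance locations (the indices $i$ with $\pi(i)>i$). Then the connectivity set of $\pi$ has cardinality $$i_1+\sum_{j=2}^{r}\max\{i_j-\pi(i_{j-1}),0\}+n-\pi(i_r).$$
   Context: A permutation $\pi$ of $[n]$ is 321-avoiding if there are no $i<j<k$ with $\pi(k)<\pi(j)<\pi(i)$. The connectivity set of $\sigma\in S_n$ is the set of indices $1\le i\le n$ such that $\sigma(k)<i$ for all $k<i$. *)

(* Defs.v *)
(* Permutations of [n] = {1,...,n} are modelled by 'S_n
   (permutations of 'I_n = {0,...,n-1}); [pv s i] reads s as a map on
   {1,...,n} (1-indexed), i.e. pv s i = s(i-1)+1 for 1 <= i <= n. *)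
From mathcomp Require Import all_boot all_order all_algebra all_fingroup.
Set Implicit Arguments. Unset Strict Implicit. Unset Printing Implicit Defensive.

Definition pv (n : nat) (s : 'S_n) (i : nat) : nat :=
  match (insub i.-1 : option 'I_n) with
  | Some j => (s j).+1
  | None => 0
  end.

Definition avoids321 (n : nat) (s : 'S_n) : bool :=
  ~~ [exists i : 'I_n, exists j : 'I_n, exists k : 'I_n,
        [&& i < j, j < k, s k < s j & s j < s i]].

Definition connectivity_set (n : nat) (s : 'S_n) : seq nat :=
  [seq i <- iota 1 n | all (fun k => pv s k < i) (iota 1 i.-1)].

Definition excedances (n : nat) (s : 'S_n) : seq nat :=
  [seq i <- iota 1 n | i < pv s i].

(* Main.v *)
Require Import Defs.
From mathcomp Require Import all_boot all_order all_algebra all_fingroup.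
From mathcomp Require Import zify.
Import Order.TTheory GRing.Theory Num.Theory.
Set Implicit Arguments.

Section Aux.
Variable n : nat.

Lemma pvE (s : 'S_n) (I : 'I_n) : pv s I.+1 = (s I).+1.
Proof. by rewrite /pv /= valK. Qed.

Lemma pv_le (s : 'S_n) i : pv s i <= n.
Proof. rewrite /pv; case: insubP => // j _ _; exact: ltn_ord. Qed.

Lemma ord_of i : 1 <= i <= n -> exists I : 'I_n, i = I.+1.
Proof.
move=> /andP[h1 h2]; have h : i.-1 < n by lia.
by exists (Ordinal h) => /=; lia.
Qed.

Lemma perm_closed (s : 'S_n) (J : nat) :
  (forall I : 'I_n, I <= J -> s I <= J) ->
  forall v : 'I_n, v <= J -> exists2 I : 'I_n, I <= J & s I = v.
Proof.
move=> H v hv.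
pose S := [set I : 'I_n | I <= J].
have sub : s @: S \subset S.
  apply/subsetP => x /imsetP[y]; rewrite !inE => hy ->; exact: H.
have eq : s @: S = S.
  apply/eqP; rewrite eqEcard sub card_imset ?leqnn //; exact: perm_inj.
have : v \in s @: S by rewrite eq inE.
case/imsetP => y; rewrite inE => hy ->; by exists y.
Qed.

Lemma exc_witness (s : 'S_n) (J : 'I_n) : J < s J ->
  exists K : 'I_n, (J < K) && (s K <= J).
Proof.
move=> hJ; case: (boolP [exists K : 'I_n, (J < K) && (s K <= J)]) => [/existsP //| /existsPn H]; exfalso.
have cl : forall I : 'I_n, I <= J -> (s^-1)%g I <= J.
  move=> I hI; case: (leqP ((s^-1)%g I) J) => // hlt.
  by move: (H ((s^-1)%g I)); rewrite hlt permKV hI.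
case: (@perm_closed (s^-1)%g J cl J (leqnn J)) => I hI.
move/(congr1 s); rewrite permKV => /(congr1 val) /= hIJ; lia.
Qed.

Lemma exc_incr (s : 'S_n) : avoids321 s ->
  forall I J : 'I_n, I < s I -> J < s J -> I < J -> s I <= s J.
Proof.
move=> A I J hI hJ hIJ; case: (leqP (s I) (s J)) => // hlt.
case: (@exc_witness s J hJ) => K /andP[h1 h2].
move/negP: A; elim; apply/existsP; exists I; apply/existsP; exists J;
apply/existsP; exists K.
apply/and4P; split => //; lia.
Qed.

Lemma id_of_noexc (s : 'S_n) : (forall I : 'I_n, s I <= I) -> s = 1%g.
Proof.
move=> H; apply/permP => x; rewrite perm1; apply/val_inj => /=.
case: (ltngtP (s x) x) => //; last by move: (H x); lia.
move=> hlt.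
have cl : forall I : 'I_n, I <= x.-1 -> s I <= x.-1.
  move=> I hI; move: (H I); lia.
have hv : s x <= x.-1 by lia.
case: (@perm_closed s x.-1 cl _ hv) => I hI /perm_inj hIx; subst I; lia.
Qed.

Fixpoint hh (f : nat -> nat) (L : nat) (E : seq nat) : nat :=
  match E with
  | [::] => n - L
  | a :: r => (a - L) + hh f (f a) r
  end.

Lemma split_iota m k p : m <= k -> k <= p ->
  iota m.+1 (p - m) = iota m.+1 (k - m) ++ iota k.+1 (p - k).
Proof.
move=> h1 h2; have -> : p - m = (k - m) + (p - k) by lia.
rewrite iotaD; congr (_ ++ iota _ _); lia.
Qed.

Lemma count_all_true (T : eqType) (p : pred T) s :
  {in s, forall x, p x} -> count p s = size s.
Proof. by move=> H; rewrite (eq_in_count (a2 := predT)) ?count_predT. Qed.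

Lemma count_all_false (T : eqType) (p : pred T) s :
  {in s, forall x, ~~ p x} -> count p s = 0.
Proof. by move=> H; rewrite (eq_in_count (a2 := pred0)) ?count_pred0 // => x /H /negbTE. Qed.

Lemma count_cov (f : nat -> nat) (E : seq nat) : forall L,
  L <= n ->
  all (fun i => i < f i <= n) E ->
  pairwise (fun i j => (i < j) && (f i <= f j)) E ->
  all (fun i => L <= f i) E ->
  count (fun x => ~~ has (fun i => (i < x) && (x <= f i)) E) (iota L.+1 (n - L))
  = hh f L E.
Proof.
elim: E => [|a r IH] L hL hall hpw hLf /=.
  by rewrite count_all_true ?size_iota.
move: hall hpw hLf => /= /andP[/andP[ha1 ha2] hall] /andP[hpa hpw] /andP[hLa hLr].
have part3 : count (fun x => ~~ (((a < x) && (x <= f a)) ||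
                 has (fun i => (i < x) && (x <= f i)) r)) (iota (f a).+1 (n - f a))
             = hh f (f a) r.
  rewrite -IH //; last first.
    apply/allP => j hj; move/allP: hpa => /(_ j hj); lia.
  apply: eq_in_count => x; rewrite mem_iota => hx.
  have -> : (x <= f a) = false by lia.
  by rewrite andbF.
case: (leqP L a) => hLa'.
  rewrite (@split_iota L a n hLa' (_ : a <= n)); last by lia.
  rewrite (@split_iota a (f a) n (_ : a <= f a) ha2); last by lia.
  rewrite !count_cat part3.
  rewrite count_all_true ?size_iota; last first.
    move=> x; rewrite mem_iota => hx.
    apply/negP => /orP[|]; first by lia.
    move/hasP => [j hj]; move/allP: hpa => /(_ j hj); lia.
  rewrite count_all_false; first by lia.
  move=> x; rewrite mem_iota => hx; rewrite negbK; apply/orP; left; lia.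
rewrite (@split_iota L (f a) n hLa ha2) count_cat part3.
rewrite count_all_false; first by lia.
move=> x; rewrite mem_iota => hx; rewrite negbK; apply/orP; left; lia.
Qed.

Lemma hh_sum (f : nat -> nat) (E' : seq nat) : forall e0,
  f (nth 0 (e0 :: E') (size E')) <= n ->
  hh f (f e0) E' + f (nth 0 (e0 :: E') (size E')) =
  \sum_(1 <= j < (size E').+1) (nth 0 (e0 :: E') j - f (nth 0 (e0 :: E') j.-1)) + n.
Proof.
elim: E' => [|e1 E'' IH] e0 /= hn.
  by rewrite big_geq //; lia.
rewrite big_nat_recl //= -addnA IH // addnA; congr (_ + _ + _).
apply: eq_big_nat => j /andP[hj _].
by case: j hj.
Qed.

End Aux.

Unset Implicit Arguments.
Local Open Scope ring_scope.

Lemma maxZ (x y : nat) :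
  Num.max (x%:Z - y%:Z)%R 0%R = (x - y)%N%:Z.
Proof.
case: (leqP y x) => h.
  rewrite max_l; first by rewrite subzn.
  by rewrite subr_ge0 lez_nat.
rewrite max_r; last by rewrite subr_le0 lez_nat ltnW.
by have -> : (x - y)%N = 0%N by lia.
Qed.


(* e`_j (0-based) is the excedance location i_{j+1}; r = size e. *)
Theorem mainTheorem13 (n : nat) (s : 'S_n) :
  avoids321 s -> s != 1%g ->
  let e := excedances s in
  let r := size e in
  (size (connectivity_set s))%:Z =
    (nth 0%N e 0)%:Z
    + \sum_(1 <= j < r) Num.max ((nth 0%N e j)%:Z - (pv s (nth 0%N e j.-1))%:Z) 0
    + n%:Z - (pv s (nth 0%N e r.-1))%:Z.
Proof.
move=> A N; cbv zeta.
have memE : forall i, (i \in excedances s) = (1 <= i <= n)%N && (i < pv s i)%N.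
  move=> i; rewrite /excedances mem_filter mem_iota andbC; congr (_ && _); lia.
have cs : size (connectivity_set s) =
   count (fun x => ~~ has (fun i => (i < x) && (x <= pv s i))%N (excedances s)) (iota 1 n).
  rewrite /connectivity_set size_filter; apply: eq_in_count => x; rewrite mem_iota => hx.
  apply/allP/idP.
    move=> H; apply/hasPn => i; rewrite memE => /andP[hi1 hi2]; apply/negP => /andP[h1 h2].
    have : i \in iota 1 x.-1 by rewrite mem_iota; lia.
    move/H; lia.
  move=> /hasPn H k; rewrite mem_iota => hk.
  case: (leqP (pv s k) k) => hpk; first by lia.
  have : k \in excedances s by rewrite memE hpk andbT; lia.
  move/H; lia.
have hsz := @count_cov n (pv s) (excedances s) 0%N (leq0n n).
rewrite subn0 in hsz; rewrite -cs in hsz.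
have hall : all (fun i => (i < pv s i <= n)%N) (excedances s).
  apply/allP => i; rewrite memE => /andP[_ ->]; by rewrite pv_le.
have hpw : pairwise (fun i j => (i < j) && (pv s i <= pv s j))%N (excedances s).
  have hs : pairwise ltn (excedances s).
    rewrite -sorted_pairwise; last exact: ltn_trans.
    apply: sorted_filter; [exact: ltn_trans | exact: iota_ltn_sorted].
  apply: (sub_in_pairwise (P := mem (excedances s))) hs; last exact: allss.
  move=> i j; rewrite !memE => /andP[hi1 hi2] /andP[hj1 hj2] hij.
  apply/andP; split => //.
  case: (@ord_of n _ hi1) => I ?; case: (@ord_of n _ hj1) => J ?; subst i j.
  move: hi2 hj2 hij; rewrite !pvE !ltnS => hi2 hj2 hij.
  by apply: (@exc_incr n s A I J hi2 hj2); rewrite -ltnS.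
have hL0 : all (fun i => 0 <= pv s i)%N (excedances s) by apply/allP.
move: (hsz hall hpw hL0) => {}hsz.
case Ee: (excedances s) hsz hall => [|e0 E'] hsz hall.
  exfalso; move/negP: N; apply; apply/eqP; apply: id_of_noexc => I.
  have : (I.+1 \in excedances s) = false by rewrite Ee.
  rewrite memE pvE; move/negbT; rewrite negb_and; case/orP; move: (ltn_ord I); lia.
have hlast : (pv s (nth 0 (e0 :: E') (size E')) <= n)%N by apply: pv_le.
move: (@hh_sum n (pv s) E' e0 hlast) => hs.
move: hsz => /= hsz.
rewrite /=.
under eq_bigr => j _ do rewrite maxZ.
rewrite -(big_morph Posz PoszD (erefl (Posz 0))).
move: hs; set S := (\sum_(1 <= j < _) _)%N; move=> hs.
lia.
Qed.
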